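(* Let $q$ be a prime power and $f:\mathbb{F}_q\to\mathbb{F}_q$ be differentially $d$-uniform. Then \[|\mathrm{Im}(f)|\geq \left\lceil\frac{q}{d+1}\right\rceil.\] Moreover, if $|\mathrm{Im}(f)|=\left\lceil\frac{q}{d+1}\right\rceil=\frac{q+\varepsilon}{d+1}$ with $1\leq\varepsilon\leq d$, then \[\sum_{y\in\mathrm{Im}(f)}(\omega(y)-(d+1))^2\leq (d+1)(\varepsilon-1)+1.\]
   Context: A map $f:\mathbb{F}_q\to\mathbb{F}_q$ is called differentially $d$-uniform ($d$-uniform) if $d=\max_{a\neq 0,\,b\in\mathbb{F}_q}|\{x\in\mathbb{F}_q: f(x+a)-f(x)=b\}|$. $\mathrm{Im}(f)$ is the image set of $f$, and for $y\in\mathbb{F}_q$, $\omega(y)=|f^{-1}(\{y\})|$ is the number of preimages of $y$ under $f$. *)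

(* Defs.v *)
From mathcomp Require Import all_boot all_order all_algebra.
Set Implicit Arguments. Unset Strict Implicit. Unset Printing Implicit Defensive.
Import GRing.Theory.
Local Open Scope ring_scope.

Definition diff_count (F : finFieldType) (f : F -> F) (a b : F) : nat :=
  #|[set x : F | f (x + a) - f x == b]|.

Definition diff_uniformity (F : finFieldType) (f : F -> F) : nat :=
  \max_(a : F | a != 0%R) \max_(b : F) diff_count f a b.

Definition is_diff_uniform (F : finFieldType) (f : F -> F) (d : nat) : Prop :=
  diff_uniformity f = d.

Definition Im (F : finFieldType) (f : F -> F) : {set F} := [set f x | x : F].
Definition omega (F : finFieldType) (f : F -> F) (y : F) : nat :=
  #|[set x : F | f x == y]|.

Definition ceil_div (m n : nat) : nat := ((m + n.-1) %/ n)%N.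

(* Main.v *)
Require Import Defs.
From mathcomp Require Import all_boot all_order all_algebra.
From mathcomp Require Import zify ring lra.
Import GRing.Theory.

Lemma sum_over_im (F : finFieldType) (f : F -> F) (G : F -> nat) :
  (\sum_x G (f x) = \sum_(y in Im f) omega f y * G y)%N.
Proof.
rewrite (partition_big f (mem (Im f))) /=; last by move=> x _; apply/imsetP; exists x.
apply: eq_bigr => y _.
rewrite (eq_bigr (fun _ => G y)); last by move=> x /eqP ->.
by rewrite sum_nat_const /omega; congr (_ * _); apply: eq_card => x; rewrite !inE.
Qed.

Lemma sumsq_bound (F : finFieldType) (f : F -> F) (d : nat) :
  is_diff_uniform f d ->
  (\sum_(y in Im f) omega f y * omega f y <= #|F| + (#|F| - 1) * d)%N.
Proof.
move=> Hd.
have -> : (\sum_(y in Im f) omega f y * omega f y = \sum_x omega f (f x))%N.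
  by rewrite (@sum_over_im _ f (omega f)).
have E : forall x, omega f (f x) = (\sum_a (f (x + a)%R == f x))%N.
  move=> x; rewrite /omega -sum1_card.
  rewrite (eq_bigl (fun x' => f x' == f x)); last by move=> x'; rewrite inE.
  rewrite -big_mkcond /= (reindex_inj (addrI x)) /=.
  by apply: eq_bigl.
rewrite (eq_bigr _ (fun x _ => E x)) exchange_big /= (bigD1 (0:F)%R) //=.
rewrite (eq_bigr (fun _ => 1%N)); last by move=> x _; rewrite addr0 eqxx.
rewrite sum1_card leq_add2l.
apply: leq_trans (_ : \sum_(a | a != 0%R) d <= _)%N.
  apply: leq_sum => a Ha.
  have -> : (\sum_x (f (x + a)%R == f x) = diff_count f a 0%R)%N.
    rewrite /diff_count -sum1_card [RHS]big_mkcond /=; apply: eq_bigr => x _.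
    by rewrite inE subr_eq0; case: (_ == _).
  rewrite -Hd /diff_uniformity.
  apply: leq_trans _ (@leq_bigmax_cond _ (fun a0 : F => a0 != 0%R) (fun a0 => \max_b diff_count f a0 b) a Ha) => /=.
  exact: (@leq_bigmax_cond _ xpredT (fun b => diff_count f a b) 0%R (erefl true)).
rewrite sum_nat_const.
have -> : #|[pred a : F | a != 0%R]| = #|predC1 (0 : F)%R| by apply: eq_card.
by rewrite cardC1 subn1.
Qed.

Lemma PoszSum (I : finType) (A : pred I) (g : I -> nat) :
  Posz (\sum_(i in A) g i)%N = (\sum_(i in A) (g i)%:Z)%R.
Proof. by apply: (big_morph Posz PoszD (erefl _)). Qed.

Theorem theorem2p6 (F : finFieldType) (f : F -> F) (d : nat) :
  is_diff_uniform f d ->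
  (ceil_div #|F| d.+1 <= #|Im f|)%N /\
  (forall eps : nat, (1 <= eps <= d)%N ->
     #|Im f| = ceil_div #|F| d.+1 ->
     (#|Im f| * d.+1 = #|F| + eps)%N ->
     (\sum_(y in Im f) ((omega f y)%:Z - (d.+1)%:Z) ^+ 2
        <= (d.+1 * (eps - 1) + 1)%:Z)%R).
Proof.
move=> Hd.
have HS := @sumsq_bound _ _ _ Hd.
set S := (\sum_(y in Im f) omega f y * omega f y)%N in HS.
have Hq : (\sum_(y in Im f) omega f y = #|F|)%N.
  rewrite -sum1_card (@sum_over_im _ f (fun _ => 1%N)).
  by apply: eq_bigr => y _; rewrite muln1.
set n := #|Im f|.
set q := #|F| in HS Hq *.
have q1 : (1 <= q)%N by apply/card_gt0P; exists 0%R.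
have Hexp : (\sum_(y in Im f) ((omega f y)%:Z - (d.+1)%:Z) ^+ 2
   = S%:Z - 2 * (d.+1)%:Z * q%:Z + n%:Z * (d.+1)%:Z ^+ 2)%R.
  rewrite /S -Hq !PoszSum.
  rewrite (eq_bigr (fun y => (omega f y)%:Z * (omega f y)%:Z
      - 2 * (d.+1)%:Z * (omega f y)%:Z + (d.+1)%:Z ^+ 2)%R); last first.
    by move=> y _; ring.
  rewrite big_split big_split /= sumrN -!mulr_sumr sumr_const /n.
  rewrite (eq_bigr (fun y => (omega f y)%:Z * (omega f y)%:Z)%R) //.
  by rewrite pmulrn -mulrzr; ring.
have Hpos : (0 <= \sum_(y in Im f) ((omega f y)%:Z - (d.+1)%:Z) ^+ 2)%R.
  by apply: Num.Theory.sumr_ge0 => y _; apply: Num.Theory.sqr_ge0.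
rewrite Hexp in Hpos.
have HSz : (S%:Z <= (q + (q - 1) * d)%N%:Z)%R by rewrite lez_nat.
have Hqn : (q <= n * d.+1)%N.
  rewrite leqNgt; apply/negP => Hlt.
  have : (n * d.+1 * d.+1 + d.+1 <= q * d.+1)%N by rewrite -mulSnr leq_mul2r.
  move: Hpos HSz; nia.
split.
  rewrite /ceil_div /=.
  rewrite -ltnS ltn_divLR // mulSn; lia.
move=> eps /andP [e1 e2] _ Hn.
rewrite Hexp.
have -> : (n%:Z * (d.+1)%:Z ^+ 2 = (q + eps)%N%:Z * (d.+1)%:Z)%R.
  by rewrite -Hn !PoszM; ring.
move: HSz; nia.
Qed.
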